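(* Let $u,c,d,v,w$ be points on the unit circle $\partial\mathbb{B}^2$, occurring in this order along the circle. Let $a=\mathrm{LIS}[u,v,c,w]$ and $b=\mathrm{LIS}[u,v,d,w]$. Then: (1) $|u,a,b,v|=|u,c,d,v|$. (2) The function $F(z)=\mathrm{LIS}[u,v,z,w]$ maps the arc of the unit circle with endpoints $u$ and $v$ that contains $c,d$ onto the segment $[u,v]$, and it is the restriction of the Möbius transformation \[ F(z)=\frac{(uv-uw-vw)z+uvw}{-wz+uv}. \] In particular $F(u)=u$, $F(v)=v$, $a=F(c)$ and $b=F(d)$. (3) If the lines $L[u,v]$ and $L[c,d]$ are parallel, then $uv=cd$ and \[ a=\frac{(u+v-d)w-cd}{w-d},\qquad b=\frac{(u+v-c)w-cd}{w-c}. \]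
   Context: Points of $\mathbb{R}^2$ are identified with complex numbers. $L[x,y]$ is the line through $x\ne y$; $\mathrm{LIS}[x,y,z,t]$ denotes the intersection point of the lines $L[x,y]$ and $L[z,t]$ (when it is a single point). For points $x,y,z,t$, $|x,y,z,t|=\frac{|x-z||y-t|}{|x-y||z-t|}$. *)

(* Defs.v *)
From Stdlib Require Import Reals List Sorting.
From Coquelicot Require Import Coquelicot.
Import ListNotations.
Open Scope C_scope.

Definition cexp (t : R) : C := (cos t, sin t).

Definition on_circle (z : C) : Prop := Cmod z = 1%R.

Definition ccw_order (l : list C) : Prop :=
  exists (th : R) (ts : list R),
    l = List.map (fun t : R => cexp (th + t)%R) ts /\
    StronglySorted Rlt ts /\
    List.Forall (fun t : R => (0 <= t < 2 * PI)%R) ts.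

Definition in_order (l : list C) : Prop := ccw_order l \/ ccw_order (rev l).

Definition on_line (x y p : C) : Prop := exists t : R, p = x + RtoC t * (y - x).

Definition on_segment (x y p : C) : Prop :=
  exists t : R, (0 <= t <= 1)%R /\ p = x + RtoC t * (y - x).

Definition is_LIS (x y z t p : C) : Prop :=
  x <> y /\ z <> t /\ on_line x y p /\ on_line z t p /\
  (forall q, on_line x y q -> on_line z t q -> q = p).

Definition cross_ratio (x y z t : C) : R :=
  (Cmod (x - z) * Cmod (y - t) / (Cmod (x - y) * Cmod (z - t)))%R.

Definition parallel (x y z t : C) : Prop := exists k : R, y - x = RtoC k * (t - z).

Definition arc (u v w z : C) : Prop :=
  on_circle z /\ (z = u \/ z = v \/ in_order [u; z; v; w]).

Definition Mob (u v w z : C) : C :=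
  ((u * v - u * w - v * w) * z + u * v * w) / (- w * z + u * v).

(* Main.v *)
Require Import Defs.
From Stdlib Require Import Reals List Lra Sorting.
From Coquelicot Require Import Coquelicot.
Import ListNotations.
Open Scope C_scope.

Definition sR (p q : C) : R := Im (p * Cconj q).

Lemma circ_nz p : on_circle p -> p <> 0.
Proof. intros H E; unfold on_circle in H; rewrite E, Cmod_0 in H; lra. Qed.

Lemma Ci_nz : Ci <> 0.
Proof. intro E; injection E; lra. Qed.

Lemma conj_inv p : on_circle p -> Cconj p = / p.
Proof.
  intros H. pose proof (Cmod2_conj p) as E. unfold on_circle in H. rewrite H in E.
  assert (Hp := circ_nz p H).
  replace (Cconj p) with (/ p * (p * Cconj p)) by (field; auto).
  rewrite <- E. replace (1^2)%R with 1%R by ring. ring.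
Qed.

Lemma sR_C p q : on_circle p -> on_circle q -> RtoC (sR p q) = (p/q - q/p)/(2*Ci).
Proof.
  intros Hp Hq. unfold sR. rewrite im_alt, Cmult_conj, Cconj_conj, !conj_inv by auto.
  field. repeat split; try apply Ci_nz; try apply circ_nz; auto.
Qed.

Lemma circ_mult p q : on_circle p -> on_circle q -> on_circle (p*q).
Proof. unfold on_circle; intros; rewrite Cmod_mult, H, H0; ring. Qed.

Lemma RtoC_nz x : x <> 0%R -> RtoC x <> 0.
Proof. intros H E; apply H; injection E; auto. Qed.

Lemma test (a b c d : C) : on_circle a -> on_circle b -> on_circle c -> on_circle d ->
  RtoC (sR (b*a) (c*d) * sR b a) = RtoC (sR d a * sR a c + - (sR d b * sR b c)).
Proof.
  intros. pose proof (circ_nz _ H). pose proof (circ_nz _ H0). pose proof (circ_nz _ H1). pose proof (circ_nz _ H2). pose proof Ci_nz.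
  rewrite RtoC_plus, RtoC_opp, !RtoC_mult, !sR_C by auto using circ_mult.
  field. repeat split; auto.
Qed.


Lemma Cmult_eq_reg_r (a b c : C) : a * c = b * c -> c <> 0 -> a = b.
Proof. intros E H. replace a with (a * c / c) by (field; auto). rewrite E. field; auto. Qed.

Ltac nzs := repeat split; auto using Ci_nz.

Lemma mob_main (hu hz hv hw u z v w : C) :
  on_circle hu -> on_circle hz -> on_circle hv -> on_circle hw ->
  u = hu*hu -> z = hz*hz -> v = hv*hv -> w = hw*hw ->
  (sR hz hu * sR hu hw <= 0)%R -> (- (sR hz hv * sR hv hw) <= 0)%R ->
  (sR hz hu * sR hu hw + - (sR hz hv * sR hv hw) <> 0)%R ->
  sR hv hu <> 0%R -> sR hz hw <> 0%R ->
  is_LIS u v z w (Mob u v w z) /\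
  Mob u v w z = u + RtoC ((sR hz hu * sR hu hw) / (sR hz hu * sR hu hw + - (sR hz hv * sR hv hw))) * (v - u) /\
  u*v - w*z <> 0.
Proof.
  intros Cu Cz Cv Cw Eu Ez Ev Ew N1 N2 N12 Svu Szw.
  pose proof (circ_nz _ Cu) as Hu. pose proof (circ_nz _ Cz) as Hz.
  pose proof (circ_nz _ Cv) as Hv. pose proof (circ_nz _ Cw) as Hw. pose proof Ci_nz as Hi.
  set (n1 := (sR hz hu * sR hu hw)%R) in *.
  set (n2 := (- (sR hz hv * sR hv hw))%R) in *.
  assert (Kid : (u*v - w*z) * (v - u) = (2*Ci)*(2*Ci) * (hu*hu) * (hv*hv) * hz * hw * RtoC (n1 + n2)).
  { subst u v w z n1 n2. rewrite RtoC_plus, RtoC_opp, !RtoC_mult, !sR_C by auto. field. nzs. }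
  assert (VU : v - u = hv * hu * (2*Ci) * RtoC (sR hv hu)).
  { subst u v. rewrite sR_C by auto. field. nzs. }
  assert (WZ : w - z = hw * hz * (2*Ci) * RtoC (sR hw hz)).
  { subst w z. rewrite sR_C by auto. field. nzs. }
  assert (Swz : sR hw hz <> 0%R).
  { intro E. apply Szw. rewrite <- (Ropp_involutive (sR hz hw)). 
    replace (- sR hz hw)%R with (sR hw hz). rewrite E; ring.
    unfold sR, Cconj, Cmult; simpl; ring. }
  assert (vu : v - u <> 0). { rewrite VU. repeat apply Cmult_neq_0; auto using RtoC_nz; try (intro E; injection E; lra). }
  assert (wz : w - z <> 0). { rewrite WZ. repeat apply Cmult_neq_0; auto using RtoC_nz; try (intro E; injection E; lra). }
  assert (den : u*v - w*z <> 0).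
  { intro E. assert (E2 : (u*v - w*z) * (v - u) = 0) by (rewrite E; ring).
    rewrite Kid in E2. revert E2. repeat apply Cmult_neq_0; auto using RtoC_nz; try (intro E'; injection E'; lra). }
  assert (MobE : Mob u v w z = u + RtoC (n1 / (n1 + n2)) * (v - u)).
  { rewrite RtoC_div by auto.
    assert (E1 : v*(z-u)*(u-w) = (2*Ci)*(2*Ci) * (hu*hu) * (hv*hv) * hz * hw * RtoC n1).
    { subst u v w z n1. rewrite !RtoC_mult, !sR_C by auto. field. nzs. }
    remember ((2*Ci)*(2*Ci) * (hu*hu) * (hv*hv) * hz * hw) as K.
    assert (KN : K <> 0). { subst K. repeat apply Cmult_neq_0; auto; intro E'; injection E'; lra. }
    assert (N12' : RtoC (n1 + n2) = (u*v - w*z) * (v - u) / K). { rewrite Kid. field. auto. }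
    rewrite N12'. transitivity (u + K * RtoC n1 / (u*v - w*z)).
    { unfold Mob. rewrite <- E1. field. auto. }
    field. auto. }
  assert (Kid' : RtoC (n1 + n2) = (u*v - w*z) * (v - u) / ((2*Ci)*(2*Ci) * (hu*hu) * (hv*hv) * hz * hw)).
  { rewrite Kid. field. repeat split; auto; try (intro E'; injection E'; lra). }
  assert (N12C : RtoC (n1 + n2) <> 0) by (apply RtoC_nz; auto).
  assert (MobZ : Mob u v w z = z + RtoC ((sR hz hu * sR hz hv * sR hv hu) / ((n1 + n2) * sR hw hz)) * (w - z)).
  { rewrite RtoC_div by (apply Rmult_integral_contrapositive; auto).
    rewrite !RtoC_mult, Kid'.
    rewrite (sR_C hz hu), (sR_C hz hv), (sR_C hv hu), (sR_C hw hz) by auto.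
    unfold Mob. subst u v w z. field. nzs. }
  set (t := (n1 / (n1 + n2))%R) in *.
  set (t' := (sR hz hu * sR hz hv * sR hv hu / ((n1 + n2) * sR hw hz))%R) in *.
  split; [|split; auto].
  split; [intro E; apply vu; rewrite E; ring|].
  split; [intro E; apply wz; rewrite E; ring|].
  split; [exists t; auto|].
  split; [exists t'; auto|].
  intros q [r Hr] [r' Hr'].
  destruct (Req_dec r t) as [Ert|Ert]. { rewrite Hr, MobE, Ert. reflexivity. }
  exfalso.
  assert (Eq : (v - u) * RtoC (r - t) = (w - z) * RtoC (r' - t')).
  { rewrite !RtoC_minus. transitivity (q - Mob u v w z).
    - rewrite Hr at 1. rewrite MobE. ring.
    - rewrite Hr' at 1. rewrite MobZ. ring. }
  rewrite VU, WZ in Eq.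
  assert (Ert' : RtoC (r - t) <> 0) by (apply RtoC_nz; lra).
  assert (Hm : hv * hu = RtoC (sR hw hz * (r' - t') / (sR hv hu * (r - t))) * (hw * hz)).
  { rewrite RtoC_div by (apply Rmult_integral_contrapositive; split; auto; lra).
    rewrite !RtoC_mult.
    apply (Cmult_eq_reg_r _ _ ((2*Ci) * RtoC (sR hv hu) * RtoC (r - t))).
    - transitivity (hv * hu * (2 * Ci) * RtoC (sR hv hu) * RtoC (r - t)%R). ring.
      rewrite Eq. field. repeat split; auto using RtoC_nz.
    - repeat apply Cmult_neq_0; auto using RtoC_nz; intro E'; injection E'; lra. }
  assert (D0 : sR (hv * hu) (hw * hz) = 0%R).
  { rewrite Hm. unfold sR, Cconj, Cmult, RtoC; simpl; ring. }
  assert (Did : RtoC (sR (hv*hu) (hw*hz) * sR hv hu) = RtoC (n1 + n2)).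
  { subst n1 n2. rewrite RtoC_plus, RtoC_opp, !RtoC_mult, !sR_C by auto using circ_mult.
    field. nzs. }
  rewrite D0, Rmult_0_l in Did. apply N12. injection Did; intros; lra.
Qed.

Lemma cexp_circle x : on_circle (cexp x).
Proof.
  unfold on_circle, Cmod, cexp; cbn [fst snd].
  replace (cos x ^ 2 + sin x ^ 2)%R with 1%R by (pose proof (sin2_cos2 x); unfold Rsqr in *; nra).
  apply sqrt_1.
Qed.

Lemma cexp_half x : cexp (x/2) * cexp (x/2) = cexp x.
Proof.
  unfold cexp, Cmult; simpl. apply injective_projections; simpl.
  - transitivity (cos (x/2 + x/2)); [rewrite cos_plus; ring | f_equal; field].
  - transitivity (sin (x/2 + x/2)); [rewrite sin_plus; ring | f_equal; field].
Qed.

Lemma sR_cexp a b : sR (cexp (a/2)) (cexp (b/2)) = sin ((a - b)/2).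
Proof.
  unfold sR, cexp, Cconj, Cmult; simpl.
  replace ((a - b)/2)%R with (a/2 - b/2)%R by field. rewrite sin_minus. ring.
Qed.

Lemma sh_pos x : (0 < x < 2*PI)%R -> (0 < sin (x/2))%R.
Proof. intros; apply sin_gt_0; lra. Qed.
Lemma sh_nneg x : (0 <= x < 2*PI)%R -> (0 <= sin (x/2))%R.
Proof. intros; apply sin_ge_0; lra. Qed.
Lemma sh_neg x : (-2*PI < x < 0)%R -> (sin (x/2) < 0)%R.
Proof.
  intros. replace (x/2)%R with (- ((-x)/2))%R by field. rewrite sin_neg.
  pose proof (sh_pos (-x)). lra.
Qed.
Lemma sh_npos x : (-2*PI < x <= 0)%R -> (sin (x/2) <= 0)%R.
Proof.
  intros. replace (x/2)%R with (- ((-x)/2))%R by field. rewrite sin_neg.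
  pose proof (sh_nneg (-x)). lra.
Qed.

Definition ord4 (al sg be ga : R) : Prop :=
  (al <= sg <= be /\ al < be /\ be < ga /\ ga < al + 2*PI)%R \/
  (ga < be /\ be <= sg <= al /\ be < al /\ al < ga + 2*PI)%R.

Definition tf (al sg be ga : R) : R :=
  (sin ((sg-al)/2) * sin ((al-ga)/2) /
   (sin ((sg-al)/2) * sin ((al-ga)/2) + - (sin ((sg-be)/2) * sin ((be-ga)/2))))%R.

Lemma mob_angles al sg be ga : ord4 al sg be ga ->
  is_LIS (cexp al) (cexp be) (cexp sg) (cexp ga) (Mob (cexp al) (cexp be) (cexp ga) (cexp sg)) /\
  Mob (cexp al) (cexp be) (cexp ga) (cexp sg) = cexp al + RtoC (tf al sg be ga) * (cexp be - cexp al) /\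
  (0 <= tf al sg be ga <= 1)%R /\
  (sg <> al -> sg <> be -> 0 < tf al sg be ga < 1)%R /\
  (cexp al * cexp be - cexp ga * cexp sg <> 0) /\
  (forall t, sin ((sg-al)/2) * sin ((al-ga)/2) =
      t * (sin ((sg-al)/2) * sin ((al-ga)/2) + - (sin ((sg-be)/2) * sin ((be-ga)/2))) ->
      tf al sg be ga = t)%R.
Proof.
  intros H.
  set (s1 := sin ((sg-al)/2)). set (s2 := sin ((al-ga)/2)).
  set (s3 := sin ((sg-be)/2)). set (s4 := sin ((be-ga)/2)).
  set (s5 := sin ((be-al)/2)). set (s6 := sin ((sg-ga)/2)).
  assert (S : ((s1 * s2 <= 0) /\ (- (s3 * s4) <= 0) /\ (s1 * s2 + - (s3 * s4) <> 0) /\ s5 <> 0 /\ s6 <> 0 /\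
           (sg <> al -> s1 * s2 < 0) /\ (sg <> be -> - (s3 * s4) < 0))%R).
  { destruct H as [H|H].
    - assert (0 <= s1)%R by (apply sh_nneg; lra).
      assert (s2 < 0)%R by (apply sh_neg; lra).
      assert (s3 <= 0)%R by (apply sh_npos; lra).
      assert (s4 < 0)%R by (apply sh_neg; lra).
      assert (0 < s5)%R by (apply sh_pos; lra).
      assert (s6 < 0)%R by (apply sh_neg; lra).
      assert (P1 : sg <> al -> (0 < s1)%R) by (intro; apply sh_pos; lra).
      assert (P3 : sg <> be -> (s3 < 0)%R) by (intro; apply sh_neg; lra).
      destruct (Req_dec sg al) as [E|E].
      + assert (Hb : sg <> be) by lra. specialize (P3 Hb).
        repeat split; try nra; intros; try lra.
      + specialize (P1 E). destruct (Req_dec sg be) as [E'|E'].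
        * repeat split; try nra; intros; try lra.
        * specialize (P3 E'). repeat split; try nra; intros; try lra.
    - assert (s1 <= 0)%R by (apply sh_npos; lra).
      assert (0 < s2)%R by (apply sh_pos; lra).
      assert (0 <= s3)%R by (apply sh_nneg; lra).
      assert (0 < s4)%R by (apply sh_pos; lra).
      assert (s5 < 0)%R by (apply sh_neg; lra).
      assert (0 < s6)%R by (apply sh_pos; lra).
      assert (P1 : sg <> al -> (s1 < 0)%R) by (intro; apply sh_neg; lra).
      assert (P3 : sg <> be -> (0 < s3)%R) by (intro; apply sh_pos; lra).
      destruct (Req_dec sg al) as [E|E].
      + assert (Hb : sg <> be) by lra. specialize (P3 Hb).
        repeat split; try nra; intros; try lra.
      + specialize (P1 E). destruct (Req_dec sg be) as [E'|E'].
        * repeat split; try nra; intros; try lra.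
        * specialize (P3 E'). repeat split; try nra; intros; try lra. }
  destruct S as (N1 & N2 & N12 & S5 & S6 & St1 & St2).
  assert (T : (0 <= tf al sg be ga <= 1)%R /\ (sg <> al -> sg <> be -> 0 < tf al sg be ga < 1)%R).
  { unfold tf. fold s1 s2 s3 s4.
    assert (s1 * s2 + - (s3 * s4) < 0)%R by lra.
    set (n1 := (s1 * s2)%R) in *. set (n2 := (- (s3 * s4))%R) in *.
    set (N := (n1 + n2)%R) in *.
    assert (iN : (/ N < 0)%R) by (apply Rinv_lt_0_compat; auto).
    assert (NiN : (N * / N = 1)%R) by (apply Rinv_r; auto).
    assert (HN : N = (n1 + n2)%R) by reflexivity. clearbody N n1 n2.
    unfold Rdiv. split.
    - split; nra.
    - intros A B. specialize (St1 A). specialize (St2 B). split; nra. }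
  pose proof (mob_main (cexp (al/2)) (cexp (sg/2)) (cexp (be/2)) (cexp (ga/2))
      (cexp al) (cexp sg) (cexp be) (cexp ga)
      (cexp_circle _) (cexp_circle _) (cexp_circle _) (cexp_circle _)
      (eq_sym (cexp_half al)) (eq_sym (cexp_half sg)) (eq_sym (cexp_half be)) (eq_sym (cexp_half ga))) as M.
  rewrite !sR_cexp in M. fold s1 s2 s3 s4 s5 s6 in M.
  destruct (M N1 N2 N12 S5 S6) as (L & ME & DN).
  unfold tf; fold s1 s2 s3 s4. unfold tf in T; fold s1 s2 s3 s4 in T.
  split; [exact L| split; [exact ME| split; [exact (proj1 T)| split; [exact (proj2 T)|split; [exact DN|]]]]].
  intros t Ht. rewrite Ht at 1. field. exact N12.
Qed.

Ltac crush_lists :=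
  repeat match goal with
  | H : StronglySorted _ (_ :: _) |- _ => apply StronglySorted_inv in H; destruct H
  | H : List.Forall _ (_ :: _) |- _ => apply Forall_cons_iff in H; destruct H
  | H : List.Forall _ nil |- _ => clear H
  | H : StronglySorted _ nil |- _ => clear H
  end.

Lemma in_order5 u c d v w : in_order [u;c;d;v;w] ->
  exists al sc sd be ga, u = cexp al /\ c = cexp sc /\ d = cexp sd /\ v = cexp be /\ w = cexp ga /\
   ((al < sc < sd /\ sd < be < ga /\ ga < al + 2*PI) \/ (ga < be < sd /\ sd < sc < al /\ al < ga + 2*PI))%R.
Proof.
  intros [H|H]; destruct H as (th & ts & E & SS & F);
  (destruct ts as [|t1 [|t2 [|t3 [|t4 [|t5 [|t6 ts]]]]]]; simpl in E; try discriminate);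
  injection E as E1 E2 E3 E4 E5; crush_lists.
  - exists (th+t1)%R, (th+t2)%R, (th+t3)%R, (th+t4)%R, (th+t5)%R. repeat split; auto; left; lra.
  - exists (th+t5)%R, (th+t4)%R, (th+t3)%R, (th+t2)%R, (th+t1)%R. repeat split; auto; right; lra.
Qed.

Lemma in_order4 u z v w : in_order [u;z;v;w] ->
  exists al sg be ga, u = cexp al /\ z = cexp sg /\ v = cexp be /\ w = cexp ga /\
   ((al < sg < be /\ be < ga < al + 2*PI) \/ (ga < be < sg /\ sg < al < ga + 2*PI))%R.
Proof.
  intros [H|H]; destruct H as (th & ts & E & SS & F);
  (destruct ts as [|t1 [|t2 [|t3 [|t4 [|t6 ts]]]]]; simpl in E; try discriminate);
  injection E as E1 E2 E3 E4; crush_lists.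
  - exists (th+t1)%R, (th+t2)%R, (th+t3)%R, (th+t4)%R. repeat split; auto; left; lra.
  - exists (th+t4)%R, (th+t3)%R, (th+t2)%R, (th+t1)%R. repeat split; auto; right; lra.
Qed.

Lemma cexp_eq a b : a = b -> cexp a = cexp b.
Proof. intros; subst; auto. Qed.

Lemma mk_in_order4 al sg be ga :
   ((al < sg < be /\ be < ga < al + 2*PI) \/ (ga < be < sg /\ sg < al < ga + 2*PI))%R ->
   in_order [cexp al; cexp sg; cexp be; cexp ga].
Proof.
  intros [H|H].
  - left. exists al, [0; sg - al; be - al; ga - al]%R. split; [|split].
    + simpl. repeat f_equal; ring.
    + repeat constructor; lra.
    + repeat constructor; lra.
  - right. exists ga, [0; be - ga; sg - ga; al - ga]%R. split; [|split].
    + simpl. repeat f_equal; ring.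
    + repeat constructor; lra.
    + repeat constructor; lra.
Qed.

Lemma sub0 (x y : C) : x - y = 0 -> x = y.
Proof. intros H. replace x with (y + (x - y)) by ring. rewrite H. ring. Qed.

Lemma sin00 a : sin ((a - a)/2) = 0%R.
Proof. replace ((a-a)/2)%R with 0%R by field. apply sin_0. Qed.

Lemma Cmod_nz (x : C) : x <> 0 -> Cmod x <> 0%R.
Proof. intros H E. apply H. apply Cmod_eq_0. auto. Qed.

Lemma arc_cases u v w z al be ga :
  u = cexp al -> v = cexp be -> w = cexp ga ->
  ((al < be /\ be < ga < al + 2*PI) \/ (ga < be /\ be < al < ga + 2*PI))%R ->
  arc u v w z ->
  exists al' sg be' ga', u = cexp al' /\ z = cexp sg /\ v = cexp be' /\ w = cexp ga' /\ ord4 al' sg be' ga'.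
Proof.
  intros Eu Ev Ew O [Cz [E|[E|Oz]]].
  - exists al, al, be, ga. subst. repeat split; auto. unfold ord4; lra.
  - exists al, be, be, ga. subst. repeat split; auto. unfold ord4; lra.
  - destruct (in_order4 _ _ _ _ Oz) as (al' & sg & be' & ga' & Eu' & Ez' & Ev' & Ew' & O').
    exists al', sg, be', ga'. repeat split; auto. unfold ord4; lra.
Qed.

Theorem lemma3p12 (u c d v w a b : C) :
  on_circle u -> on_circle c -> on_circle d -> on_circle v -> on_circle w ->
  in_order [u; c; d; v; w] ->
  is_LIS u v c w a -> is_LIS u v d w b ->
  (* (1) *)
  cross_ratio u a b v = cross_ratio u c d v /\
  (* (2) *)
  ((forall z, arc u v w z -> is_LIS u v z w (Mob u v w z)) /\
   (forall p, on_segment u v p <-> exists z, arc u v w z /\ Mob u v w z = p) /\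
   Mob u v w u = u /\ Mob u v w v = v /\ a = Mob u v w c /\ b = Mob u v w d) /\
  (* (3) *)
  (parallel u v c d ->
     u * v = c * d /\
     a = ((u + v - d) * w - c * d) / (w - d) /\
     b = ((u + v - c) * w - c * d) / (w - c)).
Proof.
  intros Hu Hc Hd Hv Hw Hord La Lb.
  destruct (in_order5 _ _ _ _ _ Hord) as (al & sc & sd & be & ga & Eu & Ec & Ed & Ev & Ew & O).
  assert (O3 : ((al < be /\ be < ga < al + 2*PI) \/ (ga < be /\ be < al < ga + 2*PI))%R) by lra.
  assert (OC : ord4 al sc be ga) by (unfold ord4; lra).
  assert (OD : ord4 al sd be ga) by (unfold ord4; lra).
  assert (OU : ord4 al al be ga) by (unfold ord4; lra).
  assert (OV : ord4 al be be ga) by (unfold ord4; lra).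
  destruct (mob_angles _ _ _ _ OC) as (LC & MC & _ & TC & DC & _).
  destruct (mob_angles _ _ _ _ OD) as (LD & MD & _ & TD & DD & _).
  destruct (mob_angles _ _ _ _ OU) as (LU & MU & _ & _ & DU & TU).
  destruct (mob_angles _ _ _ _ OV) as (LV & MV & _ & _ & DV & TV).
  assert (TC' : (0 < tf al sc be ga < 1)%R) by (apply TC; lra).
  assert (TD' : (0 < tf al sd be ga < 1)%R) by (apply TD; lra).
  assert (TU0 : tf al al be ga = 0%R) by (apply TU; rewrite sin00; ring).
  assert (TV1 : tf al be be ga = 1%R) by (apply TV; rewrite sin00; ring).
  clear TC TD TU TV.
  rewrite <- Eu, <- Ec, <- Ev, <- Ew in LC, MC, DC.
  rewrite <- Eu, <- Ed, <- Ev, <- Ew in LD, MD, DD.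
  rewrite <- Eu, <- Ev, <- Ew in LU, MU, DU, LV, MV, DV.
  set (ta := tf al sc be ga) in *. set (tb := tf al sd be ga) in *.
  rewrite TU0 in MU. rewrite TV1 in MV.
  assert (MobU : Mob u v w u = u) by (rewrite MU; ring).
  assert (MobV : Mob u v w v = v) by (rewrite MV; ring).
  assert (uv : u <> v) by (destruct LU; auto).
  assert (uw : u <> w) by (destruct LU as (_ & H & _); auto).
  assert (vw : v <> w) by (destruct LV as (_ & H & _); auto).
  assert (cw : c <> w) by (destruct LC as (_ & H & _); auto).
  assert (dw : d <> w) by (destruct LD as (_ & H & _); auto).
  assert (Ha : a = Mob u v w c).
  { destruct LC as (_ & _ & L1 & L2 & _). destruct La as (_ & _ & _ & _ & U). symmetry; apply U; auto. }
  assert (Hb : b = Mob u v w d).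
  { destruct LD as (_ & _ & L1 & L2 & _). destruct Lb as (_ & _ & _ & _ & U). symmetry; apply U; auto. }
  assert (vu0 : v - u <> 0) by (intro E; apply uv; symmetry; apply sub0; auto).
  assert (ua : u - a <> 0).
  { intro E. assert (E' : RtoC ta * (v - u) = 0) by (transitivity (- (u - a)); [rewrite Ha, MC; ring | rewrite E; ring]).
    revert E'. apply Cmult_neq_0; auto. apply RtoC_nz; lra. }
  assert (bv : b - v <> 0).
  { intro E. assert (E' : RtoC (tb - 1) * (v - u) = 0) by (transitivity (b - v); [rewrite RtoC_minus, Hb, MD; ring | exact E]).
    revert E'. apply Cmult_neq_0; auto. apply RtoC_nz; lra. }
  assert (uc : u - c <> 0).
  { intro E. apply ua. rewrite Ha. replace c with u. rewrite MobU; ring.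
    apply sub0; auto. }
  assert (dv : d - v <> 0).
  { intro E. apply bv. rewrite Hb. replace d with v. rewrite MobV; ring.
    symmetry; apply sub0; auto. }
  split.
  {
    assert (P : (u - Mob u v w d) * (Mob u v w c - v) * (u - c) * (d - v) =
                (u - d) * (c - v) * (u - Mob u v w c) * (Mob u v w d - v)).
    { unfold Mob. field. split.
      - intro E; apply DD; transitivity (- w * d + u * v); [ring | exact E].
      - intro E; apply DC; transitivity (- w * c + u * v); [ring | exact E]. }
    rewrite <- Ha, <- Hb in P. apply (f_equal Cmod) in P. rewrite !Cmod_mult in P.
    unfold cross_ratio.
    assert (X1 := Cmod_nz _ ua). assert (X2 := Cmod_nz _ bv).
    assert (X3 := Cmod_nz _ uc). assert (X4 := Cmod_nz _ dv).
    replace (Cmod (u - b) * Cmod (a - v) / (Cmod (u - a) * Cmod (b - v)))%R with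
      ((Cmod (u - b) * Cmod (a - v) * Cmod (u - c) * Cmod (d - v)) / (Cmod (u - a) * Cmod (b - v) * Cmod (u - c) * Cmod (d - v)))%R
      by (field; auto).
    rewrite P. field. auto. }
  split.
  {
    split; [|split; [|split; [exact MobU|split; [exact MobV| split; [exact Ha| exact Hb]]]]].
    - intros z Az.
      destruct (arc_cases _ _ _ _ _ _ _ Eu Ev Ew O3 Az) as (al' & sg & be' & ga' & Eu' & Ez' & Ev' & Ew' & O').
      destruct (mob_angles _ _ _ _ O') as (L & _).
      rewrite Eu', Ez', Ev', Ew'. exact L.
    - intros p. split.
      + intros (t & Ht & Ep).
        set (s2 := sin ((al - ga)/2)). set (s4 := sin ((be - ga)/2)).
        set (g := fun x => ((1-t) * (sin ((x-al)/2) * s2) - t * (- (sin ((x-be)/2) * s4)))%R).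
        assert (Cg : continuity g) by (unfold g; reg).
        assert (Ga : g al = (t * (sin ((al - be)/2) * s4))%R) by (unfold g; rewrite sin00; ring).
        assert (Gb : g be = ((1-t) * (sin ((be - al)/2) * s2))%R) by (unfold g; rewrite sin00; ring).
        assert (EX : exists x, ord4 al x be ga /\ g x = 0%R).
        { destruct O3 as [O'|O'].
          - assert (A1 : (sin ((al - be)/2) < 0)%R) by (apply sh_neg; lra).
            assert (A2 : (s4 < 0)%R) by (apply sh_neg; lra).
            assert (A3 : (0 < sin ((be - al)/2))%R) by (apply sh_pos; lra).
            assert (A4 : (s2 < 0)%R) by (apply sh_neg; lra).
            assert (B1 : (0 <= g al)%R) by (rewrite Ga; apply Rmult_le_pos; [lra | nra]).
            assert (B2 : (g be <= 0)%R).
            { rewrite Gb. assert (sin ((be - al)/2) * s2 < 0)%R by nra.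
              assert (0 <= 1 - t)%R by lra. nra. }
            destruct (IVT_cor g al be Cg) as (x & Hx & Gx); [lra | nra |].
            exists x. split; auto. unfold ord4; lra.
          - assert (A1 : (0 < sin ((al - be)/2))%R) by (apply sh_pos; lra).
            assert (A2 : (0 < s4)%R) by (apply sh_pos; lra).
            assert (A3 : (sin ((be - al)/2) < 0)%R) by (apply sh_neg; lra).
            assert (A4 : (0 < s2)%R) by (apply sh_pos; lra).
            assert (B1 : (0 <= g al)%R) by (rewrite Ga; apply Rmult_le_pos; [lra | nra]).
            assert (B2 : (g be <= 0)%R).
            { rewrite Gb. assert (sin ((be - al)/2) * s2 < 0)%R by nra.
              assert (0 <= 1 - t)%R by lra. nra. }
            destruct (IVT_cor g be al Cg) as (x & Hx & Gx); [lra | nra |].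
            exists x. split; auto. unfold ord4; lra. }
        destruct EX as (x & Ox & Gx).
        destruct (mob_angles _ _ _ _ Ox) as (_ & MX & _ & _ & _ & TX).
        assert (TXt : tf al x be ga = t).
        { apply TX. unfold g in Gx. fold s2 s4. nra. }
        exists (cexp x). split.
        * split; [apply cexp_circle|].
          destruct (Req_dec x al) as [E1|E1]; [left; rewrite E1; auto|].
          destruct (Req_dec x be) as [E2|E2]; [right; left; rewrite E2; auto|].
          right; right. rewrite Eu, Ev, Ew. apply mk_in_order4. unfold ord4 in Ox; lra.
        * rewrite Eu, Ev, Ew, MX, TXt, Ep, Eu, Ev. reflexivity.
      + intros (z & Az & Ez).
        destruct (arc_cases _ _ _ _ _ _ _ Eu Ev Ew O3 Az) as (al' & sg & be' & ga' & Eu' & Ez' & Ev' & Ew' & O').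
        destruct (mob_angles _ _ _ _ O') as (_ & MX & TX & _).
        exists (tf al' sg be' ga'). split; auto.
        rewrite <- Ez, Eu', Ez', Ev', Ew', MX. reflexivity. }
  intros [k Hk].
  assert (Cu0 := circ_nz _ Hu). assert (Cc0 := circ_nz _ Hc).
  assert (Cd0 := circ_nz _ Hd). assert (Cv0 := circ_nz _ Hv).
  assert (Hk' : Cconj (v - u) = RtoC k * Cconj (d - c)).
  { rewrite Hk, Cmult_conj. f_equal. unfold Cconj, RtoC; simpl. f_equal. ring. }
  rewrite !Cminus_conj, !conj_inv in Hk' by auto.
  assert (UV : u * v = c * d).
  { apply (Cmult_eq_reg_r _ _ (u - v)); [|intro E; apply uv; apply sub0; auto].
    symmetry. transitivity ((u * v * c * d) * (/ v - / u)); [field; auto|].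
    rewrite Hk'. transitivity (- (u * v) * (RtoC k * (d - c))); [field; auto|].
    rewrite <- Hk. ring. }
  split; [exact UV|split].
  - rewrite Ha. unfold Mob. rewrite UV. field. split.
    + intro E; apply dw; symmetry; apply sub0; auto.
    + intro E. apply (Cmult_neq_0 c (d - w)); auto.
      * intro E'; apply dw; apply sub0; auto.
      * transitivity (- w * c + c * d); [ring | exact E].
  - rewrite Hb. unfold Mob. rewrite UV. field. split.
    + intro E; apply cw; symmetry; apply sub0; auto.
    + intro E. apply (Cmult_neq_0 d (c - w)); auto.
      * intro E'; apply cw; apply sub0; auto.
      * transitivity (- w * d + c * d); [ring | exact E].
Qed.
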